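(* Let $k$ be a field of characteristic $0$, let $\Lambda_{\mathbf q}$, $G$, $\chi_{g,l}$, $\mathbb K$, $K_{g,\gamma}$ and $C_g$ be as in the context, and let $g\in G$ and $\gamma\in(\mathbb N\cup\{-1\})^n$ with $\gamma\notin C_g$. Then the complex $K_{g,\gamma}$ is acyclic, i.e. its cohomology vanishes in every degree.
   Context: Fix $n\ge 1$ and scalars $q_{i,j}\in k^*$ ($1\le i,j\le n$) with $q_{j,i}=q_{i,j}^{-1}$ and $q_{i,i}=-1$. Let $\Lambda_{\mathbf q}=k\langle x_1,\dots,x_n\mid x_ix_j=-q_{i,j}x_jx_i,\ x_i^2=0\ (1\le i,j\le n)\rangle$. For $\alpha\in\{0,1\}^n$ write $x^\alpha=x_1^{\alpha_1}\cdots x_n^{\alpha_n}$. Let $G$ be a finite group acting on $\Lambda_{\mathbf q}$ by algebra automorphisms diagonally: ${}^gx_i=\chi_{g,i}x_i$ with $\chi_{g,i}\in k$. The skew group algebra $\Lambda_{\mathbf q}\rtimes G$ is $\Lambda_{\mathbf q}\otimes kG$ with $(\lambda\otimes g)(\mu\otimes h)=\lambda({}^g\mu)\otimes gh$; it is a $\Lambda_{\mathbf q}$-bimodule via $\lambda\mapsto\lambda\otimes1$, and for each $g\in G$, $\Lambda_{\mathbf q}\otimes g$ is a sub-bimodule. For $\beta\in\mathbb N^n$ let $|\beta|=\beta_1+\dots+\beta_n$ and let $[j]\in\mathbb N^n$ be the $j$-th unit vector. Let $\mathbb K$ be the complex of $\Lambda_{\mathbf q}^e$-modules ($\Lambda^e=\Lambda\otimes\Lambda^{op}$)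 with $\mathbb K_m=\bigoplus_{\beta\in\mathbb N^n,|\beta|=m}\Lambda_{\mathbf q}\epsilon_\beta\Lambda_{\mathbf q}$, free on generators $\epsilon_\beta$, with differential $\delta_m(\epsilon_\beta)=\sum_{j=1}^n\big(\prod_{l<j}q_{l,j}^{\beta_l}\,x_j\epsilon_{\beta-[j]}+(-1)^{\sum_{l\le j}\beta_l}\prod_{l>j}(-q_{j,l})^{\beta_l}\,\epsilon_{\beta-[j]}x_j\big)$ (where $\epsilon_{\beta-[j]}:=0$ if $\beta_j=0$), augmented by $\epsilon_0\mapsto 1\in\Lambda_{\mathbf q}$; it is a projective $\Lambda_{\mathbf q}^e$-resolution of $\Lambda_{\mathbf q}$. For $\alpha\in\{0,1\}^n$, $\beta\in\mathbb N^n$, $g\in G$, let $(x^\alpha\otimes g)\epsilon_\beta^*\in\operatorname{Hom}_{\Lambda_{\mathbf q}^e}(\mathbb K_{|\beta|},\Lambda_{\mathbf q}\otimes g)$ be the map sending $\epsilon_\beta\mapsto x^\alpha\otimes g$ and $\epsilon_{\beta'}\mapsto 0$ for $\beta'\ne\beta$. The cochain complex $\operatorname{Hom}_{\Lambda_{\mathbf q}^e}(\mathbb K,\Lambda_{\mathbf q}\otimes g)$ has the differential induced by $\delta$ (precomposition). For $\gamma\in(\mathbb N\cup\{-1\})^n$ let $K^m_{g,\gamma}=\operatorname{span}_k\{(x^\alpha\otimes g)\epsilon_\beta^*\mid \alpha\in\{0,1\}^n,\beta\in\mathbb N^n,|\beta|=m,\beta-\alpha=\gamma\}$; then $K_{g,\gamma}=\bigoplus_m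 K^m_{g,\gamma}$ is a subcomplex of $\operatorname{Hom}_{\Lambda_{\mathbf q}^e}(\mathbb K,\Lambda_{\mathbf q}\otimes g)$. Define $C_g=\{\gamma\in(\mathbb N\cup\{-1\})^n\mid \text{for all } l,\ \gamma_l=-1 \text{ or } (-1)^{\gamma_l}\prod_{k\ne l}(-q_{k,l})^{\gamma_k}=\chi_{g,l}\}$. *)

(* Defs.v *)
From HB Require Import structures.
From mathcomp Require Import all_boot all_order fingroup all_algebra.
Set Implicit Arguments. Unset Strict Implicit. Unset Printing Implicit Defensive.
Import Order.TTheory GRing.Theory Num.Theory.
Local Open Scope ring_scope.

Section QuantumExterior.
Variables (k : fieldType) (n : nat).

Local Notation expo := {ffun 'I_n -> bool}.

(* Elements of Lambda_q, written in the k-basis {x^alpha | alpha in {0,1}^n}: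
   u = sum_alpha (u alpha) x^alpha. *)
Local Notation Lam := {ffun expo -> k}.

Definition mono (a : expo) : Lam := [ffun b => (b == a)%:R].

Definition lone : Lam := mono [ffun=> false].

Definition xgen (i : 'I_n) : Lam := mono [ffun l => l == i].

(* Multiplication on basis monomials, derived from the relations
   x_i x_j = - q_{ij} x_j x_i and x_i^2 = 0:
   x^a x^b = 0 if a, b overlap, and otherwise
   x^a x^b = (prod_{i > j, a_i = 1, b_j = 1} (- q_{i,j})) x^{a+b}. *)
Definition mcoef (q : 'I_n -> 'I_n -> k) (a b : expo) : k :=
  \prod_(i : 'I_n) \prod_(j : 'I_n | (j < i)%N && a i && b j) (- q i j).

Definition disj (a b : expo) : bool := [forall l, ~~ (a l && b l)].

Definition lmul (q : 'I_n -> 'I_n -> k) (u v : Lam) : Lam :=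
  [ffun c => \sum_(a : expo) \sum_(b : expo)
     (if disj a b && (c == [ffun l => a l || b l])
      then mcoef q a b * u a * v b else 0)].

Definition lscale (c : k) (u : Lam) : Lam := [ffun a => c * u a].

(* The diagonal action of g: ^g x_i = chi g i x_i, extended to the algebra
   automorphism ^g x^a = (prod_{a_l = 1} chi g l) x^a. *)
Definition gact (gT : finGroupType) (chi : gT -> 'I_n -> k) (g : gT) (u : Lam) : Lam :=
  [ffun a : expo => (\prod_(l : 'I_n | a l) chi g l) * u a].

(* Bimodule structure on Lambda_q (x) g  (identified with Lambda_q via
   mu (x) g <-> mu):  lambda . (mu (x) g) . nu = lambda mu (^g nu) (x) g. *)
Definition bimod_act (q : 'I_n -> 'I_n -> k) (gT : finGroupType)
    (chi : gT -> 'I_n -> k) (g : gT) (lam mu nu : Lam) : Lam :=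
  lmul q (lmul q lam mu) (gact chi g nu).

Definition degN (beta : 'I_n -> nat) : nat := (\sum_(l : 'I_n) beta l)%N.
Definition subunit (beta : 'I_n -> nat) (j : 'I_n) : 'I_n -> nat :=
  fun l => if l == j then (beta l).-1 else beta l.

(* A cochain of degree m in Hom_{Lambda^e}(K_m, Lambda_q (x) g): since K_m is
   free on the eps_beta (|beta| = m), such a map is the same as the family of
   images f beta = image of eps_beta (only the values at |beta| = m matter). *)
Definition cochain := ('I_n -> nat) -> Lam.

Definition c_left (q : 'I_n -> 'I_n -> k) (beta : 'I_n -> nat) (j : 'I_n) : k :=
  \prod_(l : 'I_n | (l < j)%N) q l j ^+ beta l.
Definition c_right (q : 'I_n -> 'I_n -> k) (beta : 'I_n -> nat) (j : 'I_n) : k :=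
  (-1) ^+ (\sum_(l : 'I_n | (l <= j)%N) beta l)%N *
  \prod_(l : 'I_n | (j < l)%N) (- q j l) ^+ beta l.

(* The cochain differential (precomposition with delta):
   (d f)(eps_beta) = f(delta(eps_beta))
     = sum_j [beta_j > 0] ( c_left  x_j . f(eps_{beta-[j]})
                          + c_right f(eps_{beta-[j]}) . x_j ). *)
Definition dcoch (q : 'I_n -> 'I_n -> k) (gT : finGroupType)
    (chi : gT -> 'I_n -> k) (g : gT) (f : cochain) : cochain :=
  fun beta => \sum_(j : 'I_n)
    (if (0 < beta j)%N then
       lscale (c_left q beta j) (bimod_act q chi g (xgen j) (f (subunit beta j)) lone)
     + lscale (c_right q beta j) (bimod_act q chi g lone (f (subunit beta j)) (xgen j))
     else 0).

(* f lies in K^m_{g,gamma} = span{(x^alpha (x) g) eps_beta^* | |beta| = m,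
   beta - alpha = gamma}: for each beta with |beta| = m, the image of eps_beta
   is a combination of those x^alpha with beta - alpha = gamma. *)
Definition inK (gamma : 'I_n -> int) (m : nat) (f : cochain) : Prop :=
  forall beta : 'I_n -> nat, degN beta = m ->
    forall a : expo, f beta a != 0 ->
      forall l, (beta l)%:Z - (a l)%:Z = gamma l.

Definition cohom_vanishes (q : 'I_n -> 'I_n -> k) (gT : finGroupType)
    (chi : gT -> 'I_n -> k) (g : gT) (gamma : 'I_n -> int) (m : nat) : Prop :=
  forall f : cochain, inK gamma m f ->
    (forall beta, degN beta = m.+1 -> dcoch q chi g f beta = 0) ->
    match m with
    | 0%N => forall beta, degN beta = 0%N -> f beta = 0
    | m'.+1 => exists h : cochain, inK gamma m' h /\
                 forall beta, degN beta = m -> dcoch q chi g h beta = f beta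
    end.

Definition in_Cg (q : 'I_n -> 'I_n -> k) (gT : finGroupType)
    (chi : gT -> 'I_n -> k) (g : gT) (gamma : 'I_n -> int) : Prop :=
  forall l : 'I_n, gamma l = -1 \/
    (-1) ^ (gamma l) * \prod_(kk : 'I_n | kk != l) (- q kk l) ^ (gamma kk) = chi g l.

End QuantumExterior.

(* Main.v *)
Require Import Defs.
From HB Require Import structures.
From mathcomp Require Import all_boot all_order fingroup all_algebra.
From Stdlib Require Import FunctionalExtensionality.
From mathcomp Require Import ring.
Import Order.TTheory GRing.Theory Num.Theory.
Set Implicit Arguments. Unset Strict Implicit. Unset Printing Implicit Defensive.
Local Open Scope ring_scope.

Section S.
Variables (k : fieldType) (n : nat) (q : 'I_n -> 'I_n -> k).
Local Notation expo := {ffun 'I_n -> bool}.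
Local Notation Lam := {ffun expo -> k}.

Definition unitv (j : 'I_n) : expo := [ffun l => l == j].
Definition remv (c : expo) j : expo := [ffun l => c l && (l != j)].
Definition addv (c : expo) j : expo := [ffun l => c l || (l == j)].
Definition ev0 : expo := [ffun => false].

Lemma sum_only (F : expo -> k) x0 : (forall x, x != x0 -> F x = 0) -> \sum_x F x = F x0.
Proof. by move=> H; rewrite (bigD1 x0) //= big1 ?addr0. Qed.

Lemma lmul_supp_r (u v : Lam) b0 : (forall b, b != b0 -> v b = 0) -> forall c,
  lmul q u v c = \sum_a (if disj a b0 && (c == [ffun l => a l || b0 l])
                         then mcoef q a b0 * u a * v b0 else 0).
Proof.
move=> Hv c; rewrite ffunE; apply: eq_bigr => a _.
rewrite (@sum_only _ b0) // => b nb; rewrite Hv //; by case: ifP; rewrite ?mulr0.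
Qed.

Lemma lmul_supp_l (u v : Lam) a0 : (forall a, a != a0 -> u a = 0) -> forall c,
  lmul q u v c = \sum_b (if disj a0 b && (c == [ffun l => a0 l || b l])
                         then mcoef q a0 b * u a0 * v b else 0).
Proof.
move=> Hu c; rewrite ffunE (@sum_only _ a0) // => a na.
by apply: big1 => b _; rewrite Hu //; case: ifP; rewrite ?mulr0 ?mul0r.
Qed.

Lemma cond_r c a j : disj a (unitv j) && (c == [ffun l => a l || unitv j l])
   = c j && (a == remv c j).
Proof.
apply/idP/idP.
- case/andP => /forallP Hd /eqP Hc.
  have Hj : a j = false by move: (Hd j); rewrite ffunE eqxx andbT; case: (a j).
  rewrite Hc ffunE ffunE eqxx orbT /=.
  apply/eqP/ffunP => l; rewrite !ffunE.
  by case: (eqVneq l j) => [->|Hlj]; rewrite ?Hj ?orbF ?andbT ?andbF.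
- case/andP => Hcj /eqP ->; apply/andP; split.
  + apply/forallP => l; rewrite !ffunE.
    by case: (eqVneq l j); rewrite ?andbF ?andbT.
  + apply/eqP/ffunP => l; rewrite !ffunE.
    by case: (eqVneq l j) => [->|]; rewrite ?Hcj ?orbT ?orbF ?andbT.
Qed.

Lemma cond_l c b j : disj (unitv j) b && (c == [ffun l => unitv j l || b l])
   = c j && (b == remv c j).
Proof.
rewrite -(cond_r c b j); congr andb.
- by apply/forallP/forallP => H l; move: (H l); rewrite andbC.
- by congr (c == _); apply/ffunP => l; rewrite !ffunE orbC.
Qed.

Lemma cond_0r c a : disj a ev0 && (c == [ffun l => a l || ev0 l]) = (a == c).
Proof.
apply/idP/idP.
- case/andP => _ /eqP ->; apply/eqP/ffunP => l; by rewrite !ffunE orbF.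
- move/eqP => ->; apply/andP; split.
  + by apply/forallP => l; rewrite ffunE andbF.
  + by apply/eqP/ffunP => l; rewrite !ffunE orbF.
Qed.

Lemma cond_0l c b : disj ev0 b && (c == [ffun l => ev0 l || b l]) = (b == c).
Proof.
rewrite -(cond_0r c b); congr andb.
- by apply/forallP/forallP => H l; move: (H l); rewrite andbC.
- by congr (c == _); apply/ffunP => l; rewrite !ffunE orbC.
Qed.

Lemma mcoef0r a : mcoef q a ev0 = 1.
Proof. by apply: big1 => i _; apply: big1 => j /andP [_]; rewrite ffunE. Qed.
Lemma mcoef0l b : mcoef q ev0 b = 1.
Proof. by apply: big1 => i _; apply: big1 => j /andP [/andP [_]]; rewrite ffunE. Qed.

Lemma pick1 (F : expo -> k) (P : bool) r :
  \sum_a (if P && (a == r) then F a else 0) = if P then F r else 0.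
Proof.
case: P => /=; last by rewrite big1.
by rewrite -big_mkcond big_pred1_eq.
Qed.

Lemma lone_supp a : a != ev0 -> (lone k n) a = 0 :> k.
Proof. by move=> H; rewrite ffunE (negbTE H). Qed.
Lemma lone_ev0 : (lone k n) ev0 = 1 :> k.
Proof. by rewrite ffunE eqxx. Qed.

Lemma lmul_1r (u : Lam) : lmul q u (lone k n) = u.
Proof.
apply/ffunP => c; rewrite (lmul_supp_r _ lone_supp).
under eq_bigr do rewrite cond_0r.
rewrite (pick1 _ true) /= mcoef0r lone_ev0; by rewrite mul1r mulr1.
Qed.

Lemma lmul_1l (u : Lam) : lmul q (lone k n) u = u.
Proof.
apply/ffunP => c; rewrite (lmul_supp_l _ lone_supp).
under eq_bigr do rewrite cond_0l.
rewrite (pick1 _ true) /= mcoef0l lone_ev0; by rewrite !mul1r.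
Qed.

Lemma lmul_xr (u v : Lam) j : (forall b, b != unitv j -> v b = 0) -> forall c,
  lmul q u v c = if c j then mcoef q (remv c j) (unitv j) * u (remv c j) * v (unitv j) else 0.
Proof.
move=> Hv c; rewrite (lmul_supp_r _ Hv).
under eq_bigr do rewrite cond_r.
by rewrite pick1.
Qed.

Lemma lmul_xl (u v : Lam) j : (forall a, a != unitv j -> u a = 0) -> forall c,
  lmul q u v c = if c j then mcoef q (unitv j) (remv c j) * u (unitv j) * v (remv c j) else 0.
Proof.
move=> Hu c; rewrite (lmul_supp_l _ Hu).
under eq_bigr do rewrite cond_l.
by rewrite pick1.
Qed.

Variables (gT : finGroupType) (chi : gT -> 'I_n -> k) (g : gT).

Lemma gact_lone : gact chi g (lone k n) = lone k n.
Proof.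
apply/ffunP => a; rewrite !ffunE.
case: (eqVneq a [ffun=> false]) => [->|_]; last by rewrite mulr0.
by rewrite big_pred0 ?mul1r // => l; rewrite ffunE.
Qed.

Lemma xgen_supp j a : a != unitv j -> xgen k j a = 0.
Proof. by move=> H; rewrite ffunE (negbTE H). Qed.
Lemma xgen_at j : xgen k j (unitv j) = 1.
Proof. by rewrite ffunE eqxx. Qed.

Lemma gact_x_supp j a : a != unitv j -> gact chi g (xgen k j) a = 0.
Proof. by move=> H; rewrite ffunE xgen_supp // mulr0. Qed.
Lemma gact_x_at j : gact chi g (xgen k j) (unitv j) = chi g j.
Proof.
rewrite ffunE xgen_at mulr1.
rewrite (eq_bigl (fun l => l == j)) ?big_pred1_eq // => l; by rewrite ffunE.
Qed.

Lemma lscaleE (a : k) (u : Lam) c : lscale a u c = a * u c.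
Proof. by rewrite ffunE. Qed.

Definition Kc (beta : 'I_n -> nat) (c : expo) (j : 'I_n) : k :=
  c_left q beta j * mcoef q (unitv j) (remv c j)
  + c_right q beta j * chi g j * mcoef q (remv c j) (unitv j).

Lemma dcoch_E (f : cochain k n) beta c :
  dcoch q chi g f beta c = \sum_j (if (0 < beta j)%N && c j
     then Kc beta c j * f (subunit beta j) (remv c j) else 0).
Proof.
rewrite /dcoch sum_ffunE; apply: eq_bigr => j _.
case: ifP => Hb /=; last by rewrite ffunE.
rewrite /bimod_act gact_lone lmul_1r lmul_1l ffunE !lscaleE.

rewrite (lmul_xl _ (@xgen_supp j)) (lmul_xr _ (@gact_x_supp j)).
rewrite xgen_at gact_x_at /Kc.
case: (c j); last by rewrite !mulr0 addr0.
rewrite mulr1 mulrDl !mulrA; ring.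
Qed.

Hypothesis Hq0 : forall i j, q i j != 0.
Hypothesis Hqinv : forall i j, q j i = (q i j)^-1.

Lemma qq1 i j : q i j * q j i = 1.
Proof. by rewrite (Hqinv i j) mulfV. Qed.

Lemma ord_ltn_neq (a b : 'I_n) : (a < b)%N -> a != b.
Proof. by move=> H; apply/eqP => E; move: H; rewrite E ltnn. Qed.

Lemma mcoef_ul b j : mcoef q (unitv j) b = \prod_(kk : 'I_n | (kk < j)%N && b kk) (- q j kk).
Proof.
rewrite /mcoef (bigD1 j) //= [X in _ * X]big1 ?mulr1.
  by apply: eq_bigl => kk; rewrite ffunE eqxx andbT.
move=> i /negbTE Hij; apply: big1 => kk /andP [/andP [_]]; by rewrite ffunE Hij.
Qed.

Lemma mcoef_ur b j : mcoef q b (unitv j) = \prod_(i : 'I_n | (j < i)%N && b i) (- q i j).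
Proof.
rewrite /mcoef [RHS]big_mkcond; apply: eq_bigr => i _.
case Hc: ((j < i)%N && b i).
- rewrite (eq_bigl (pred1 j)) ?big_pred1_eq // => j'; rewrite ffunE /=.
  by case: eqVneq => [->|_]; rewrite ?Hc ?andbF.
- rewrite big_pred0 // => j'; rewrite ffunE.
  by case: eqVneq => [->|_]; rewrite ?Hc ?andbF.
Qed.

Definition LF (beta : 'I_n -> nat) (c : expo) (j kk : 'I_n) : k :=
  if (kk < j)%N then q kk j ^+ beta kk * (if c kk then - q j kk else 1) else 1.
Definition RF (beta : 'I_n -> nat) (c : expo) (j kk : 'I_n) : k :=
  if (j < kk)%N then (- q j kk) ^+ beta kk * (if c kk then - q kk j else 1) else 1.

Lemma left_form (beta : 'I_n -> nat) (c : expo) (j : 'I_n) :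
  c_left q beta j * mcoef q (unitv j) (remv c j) = \prod_kk LF beta c j kk.
Proof.
rewrite /c_left mcoef_ul big_mkcond [X in _ * X]big_mkcond -big_split.
apply: eq_bigr => kk _; rewrite /LF ffunE.
case: ifP => H /=; last by rewrite mulr1.
rewrite (ord_ltn_neq H) andbT; by case: (c kk); rewrite ?mulr1.
Qed.

Lemma right_form (beta : 'I_n -> nat) (c : expo) (j : 'I_n) :
  c_right q beta j * chi g j * mcoef q (remv c j) (unitv j) =
  (-1) ^+ (\sum_(kk : 'I_n | (kk <= j)%N) beta kk)%N * chi g j * \prod_kk RF beta c j kk.
Proof.
rewrite /c_right mcoef_ur.
have -> : \prod_kk RF beta c j kk =
  (\prod_(kk : 'I_n | (j < kk)%N) (- q j kk) ^+ beta kk) *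
   \prod_(i : 'I_n | (j < i)%N && remv c j i) (- q i j).
  rewrite [X in _ = X * _]big_mkcond [X in _ = _ * X]big_mkcond -big_split.
  apply: eq_bigr => kk _; rewrite /RF ffunE.
  case: ifP => H /=; last by rewrite mulr1.
  rewrite eq_sym (ord_ltn_neq H) andbT; by case: (c kk); rewrite ?mulr1.
ring.
Qed.

Definition sgn (l j : 'I_n) : k := if (l < j)%N then -1 else 1.

Lemma subunit_ne (beta : 'I_n -> nat) (l kk : 'I_n) : kk != l -> subunit beta l kk = beta kk.
Proof. by rewrite /subunit => /negbTE ->. Qed.
Lemma subunit_eq (beta : 'I_n -> nat) (l : 'I_n) : subunit beta l l = (beta l).-1.
Proof. by rewrite /subunit eqxx. Qed.
Lemma remv_ne (c : expo) (l kk : 'I_n) : kk != l -> remv c l kk = c kk.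
Proof. by rewrite ffunE => ->; rewrite andbT. Qed.
Lemma remv_eq (c : expo) (l : 'I_n) : remv c l l = false.
Proof. by rewrite ffunE eqxx andbF. Qed.

Lemma LF_shift (beta : 'I_n -> nat) (c : expo) (l j : 'I_n) : l != j -> (0 < beta l)%N -> c l ->
  \prod_kk LF (subunit beta l) (remv c l) j kk = sgn l j * \prod_kk LF beta c j kk.
Proof.
move=> Hlj Hb Hc.
rewrite (bigD1 l) //= [in RHS](bigD1 l) //=.
rewrite (eq_bigr (LF beta c j)); last first.
  by move=> kk Hkk; rewrite /LF subunit_ne // remv_ne.
rewrite mulrA; congr (_ * _).
rewrite /LF /sgn subunit_eq remv_eq Hc.
case: ifP => H; last by rewrite mulr1.
case: (beta l) Hb => // b _ /=.
rewrite exprS mulr1.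
have := qq1 l j. move=> E.
transitivity (q l j ^+ b * (q l j * q j l)); first by rewrite E mulr1.
ring.
Qed.

Lemma RF_shift (beta : 'I_n -> nat) (c : expo) (l j : 'I_n) : l != j -> (0 < beta l)%N -> c l ->
  \prod_kk RF (subunit beta l) (remv c l) j kk = \prod_kk RF beta c j kk.
Proof.
move=> Hlj Hb Hc.
rewrite (bigD1 l) //= [in RHS](bigD1 l) //=.
rewrite (eq_bigr (RF beta c j)); last first.
  by move=> kk Hkk; rewrite /RF subunit_ne // remv_ne.
congr (_ * _).
rewrite /RF subunit_eq remv_eq Hc.
case: ifP => H //.
case: (beta l) Hb => // b _ /=.
rewrite exprS mulr1.
have E := qq1 j l.
transitivity ((- q j l) ^+ b * (q j l * q l j)); first by rewrite E mulr1.
ring.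
Qed.

Lemma sign_shift (beta : 'I_n -> nat) (l j : 'I_n) : l != j -> (0 < beta l)%N ->
  (-1) ^+ (\sum_(kk : 'I_n | (kk <= j)%N) subunit beta l kk)%N
  = sgn l j * (-1) ^+ (\sum_(kk : 'I_n | (kk <= j)%N) beta kk)%N :> k.
Proof.
move=> Hlj Hb; rewrite /sgn.
case: ifP => H.
- rewrite (bigD1 l) /= ?(ltnW H) // [in RHS](bigD1 l) /= ?(ltnW H) //.
  rewrite (eq_bigr beta); last by move=> kk /andP [_ Hk]; rewrite subunit_ne.
  rewrite subunit_eq; case: (beta l) Hb => // b _ /=.
  by rewrite addSn exprS mulrA mulrNN !mul1r.
- rewrite mul1r; congr (_ ^+ _); apply: eq_bigr => kk Hk; rewrite subunit_ne //.
  apply/eqP => E; move: Hk H; rewrite E => Hk.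
  rewrite leq_eqVlt in Hk; case/orP: Hk => [/eqP E2|->] //.
  by move: Hlj; rewrite -(inj_eq val_inj) /= E2 eqxx.
Qed.

Lemma K_shift (beta : 'I_n -> nat) (c : expo) (l j : 'I_n) : l != j -> (0 < beta l)%N -> c l ->
  Kc (subunit beta l) (remv c l) j = sgn l j * Kc beta c j.
Proof.
move=> Hlj Hb Hc.
rewrite /Kc left_form right_form LF_shift // RF_shift // sign_shift //.
rewrite left_form right_form; ring.
Qed.

Lemma sgn_anti l j : l != j -> sgn l j = - sgn j l.
Proof.
move=> H; rewrite /sgn; case: (ltngtP l j) => [_|_|E] /=.
- by [].
- by rewrite opprK.
- by move: H; rewrite -(inj_eq val_inj) /= E eqxx.
Qed.

Lemma signsq (b : nat) : (-1) ^+ b * (-1) ^+ b = 1 :> k.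
Proof. by rewrite -exprMn mulrNN mulr1 expr1n. Qed.

Lemma powz_pred (x : k) (b : nat) (z : int) : x != 0 -> z = b%:Z - 1 ->
  x ^ z = x ^+ b / x.
Proof.
move=> Hx ->.
have E : x ^ (b%:Z - 1) * x = x ^+ b.
  by rewrite -[X in _ * X]expr1z -expfzDr // subrK exprnP.
by rewrite -E mulfK.
Qed.

Lemma powz_nat (x : k) (b : nat) (z : int) : z = b%:Z -> x ^ z = x ^+ b.
Proof. by move=> ->; rewrite exprnP. Qed.

Lemma gam_eq (b : nat) (c : bool) (z : int) : b%:Z - (c : nat)%:Z = z ->
  z = b%:Z - (c : nat)%:Z.
Proof. by move=> ->. Qed.

Lemma negq0 i j : - q i j != 0.
Proof. by rewrite oppr_eq0. Qed.

Lemma F1 (kk l : 'I_n) (b : nat) (c : bool) (z : int) :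
  b%:Z - (c : nat)%:Z = z ->
  q kk l ^+ b * (if c then - q l kk else 1) = (-1) ^+ b * (- q kk l) ^ z.
Proof.
move=> /gam_eq Hz; have Hq := Hq0 kk l.
case: c Hz => /= Hz.
- rewrite (powz_pred (negq0 kk l) Hz) exprNn (Hqinv kk l).
  have S := signsq b.
  rewrite expr1n mulr1 (exprNn (q kk l)) invrN.
  transitivity ((-1) ^+ b * (-1) ^+ b * (q kk l ^+ b * - (q kk l)^-1) : k).
    by rewrite S mul1r.
  ring.
- rewrite subr0 in Hz; rewrite (powz_nat _ Hz) (exprNn (q kk l)) mulr1 mulrA signsq mul1r //.
Qed.

Lemma F2 (kk l : 'I_n) (b : nat) (c : bool) (z : int) :
  b%:Z - (c : nat)%:Z = z ->
  (- q l kk) ^+ b * (if c then - q kk l else 1) = ((- q kk l) ^ z)^-1.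
Proof.
move=> /gam_eq Hz; have Hq := Hq0 kk l.
have E : - q l kk = (- q kk l)^-1 by rewrite (Hqinv kk l) invrN.
case: c Hz => /= Hz.
- rewrite (powz_pred (negq0 kk l) Hz) E exprVn invfM invrK //.
- rewrite subr0 in Hz; rewrite (powz_nat _ Hz) E exprVn mulr1 //.
Qed.

Lemma K_nonzero (gamma : 'I_n -> int) (l : 'I_n) (beta : 'I_n -> nat) (c : expo) :
  (forall kk, (beta kk)%:Z - (c kk : nat)%:Z = gamma kk) -> c l ->
  (-1) ^ (gamma l) * \prod_(kk : 'I_n | kk != l) (- q kk l) ^ (gamma kk) != chi g l ->
  Kc beta c l != 0.
Proof.
move=> Hbc Hcl Hcond; apply: contra Hcond => /eqP HK.
pose X := fun kk => (- q kk l) ^ (gamma kk).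
have EL : \prod_kk LF beta c l kk =
   (-1) ^+ (\sum_(kk : 'I_n | (kk < l)%N) beta kk)%N * \prod_(kk : 'I_n | (kk < l)%N) X kk.
  rewrite -prodrXr -big_split [RHS]big_mkcond /=; apply: eq_bigr => kk _; rewrite /LF.
  by case: ifP => H //; exact: F1.
have ER : \prod_kk RF beta c l kk = (\prod_(kk : 'I_n | (l < kk)%N) X kk)^-1.
  rewrite -prodfV [RHS]big_mkcond; apply: eq_bigr => kk _; rewrite /RF.
  by case: ifP => H //; exact: F2.
have ES : (\sum_(kk : 'I_n | (kk <= l)%N) beta kk =
           \sum_(kk : 'I_n | (kk < l)%N) beta kk + beta l)%N.
  rewrite (bigD1 l) //= addnC; congr (_ + _)%N; apply: eq_bigl => kk.
  by rewrite -(inj_eq val_inj) /= ltn_neqAle andbC.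
have EP : \prod_(kk : 'I_n | kk != l) X kk =
   \prod_(kk : 'I_n | (kk < l)%N) X kk * \prod_(kk : 'I_n | (l < kk)%N) X kk.
  rewrite big_mkcond [X in _ = X * _]big_mkcond [X in _ = _ * X]big_mkcond -big_split.
  apply: eq_bigr => kk _ /=; rewrite -(inj_eq val_inj) /=.
  by case: ltngtP; rewrite ?mulr1 ?mul1r.
have P2n0 : \prod_(kk : 'I_n | (l < kk)%N) X kk != 0.
  by apply/prodf_neq0 => kk _; apply: expfz_neq0; apply: negq0.
have Hgl : gamma l = (beta l)%:Z - 1 by rewrite -Hbc Hcl.
rewrite (powz_pred (x := -1) _ Hgl) ?oppr_eq0 ?oner_eq0 // invrN invr1 mulrN1.
rewrite EP.
move: HK; rewrite /Kc left_form right_form EL ER ES exprD.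
set s1 := (-1) ^+ _; set sb := (-1) ^+ (beta l).
set P1 := \prod_(kk : 'I_n | (kk < l)%N) X kk.
set P2 := \prod_(kk : 'I_n | (l < kk)%N) X kk.
move=> HK.
have H1 : s1 * (P1 + sb * chi g l / P2) = 0 by rewrite -HK; ring.
move/eqP: H1; rewrite mulf_eq0 signr_eq0 /= => /eqP H1.
have S : sb * sb = 1 by rewrite /sb signsq.
have H2 : (P1 + sb * chi g l / P2) * (sb * P2) = sb * P1 * P2 + sb * sb * chi g l.
  by field.
rewrite H1 mul0r S mul1r in H2.
apply/eqP; apply: (addrI (sb * P1 * P2)); rewrite -H2; ring.
Qed.

Definition incv (beta : 'I_n -> nat) (l : 'I_n) : 'I_n -> nat :=
  fun kk => if kk == l then (beta kk).+1 else beta kk.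

Lemma intS (m : nat) : (m.+1)%:Z - 1 = m%:Z.
Proof. by rewrite -addn1 PoszD addrK. Qed.

Lemma intP (m : nat) : (0 < m)%N -> (m.-1)%:Z = m%:Z - 1.
Proof. by move=> H; rewrite -{2}(prednK H) intS. Qed.

Lemma inc_pt (beta : 'I_n -> nat) (a : expo) (l kk : 'I_n) : a l = false ->
  (incv beta l kk)%:Z - (addv a l kk : nat)%:Z = (beta kk)%:Z - (a kk : nat)%:Z.
Proof.
move=> Ha; rewrite /incv ffunE.
case: (eqVneq kk l) => [->|H]; last by rewrite orbF.
by rewrite Ha orbT intS subr0.
Qed.

Lemma cons_pt (beta : 'I_n -> nat) (c : expo) (j l kk : 'I_n) :
  remv c j l = false -> c j -> (0 < beta j)%N ->
  (incv (subunit beta j) l kk)%:Z - (addv (remv c j) l kk : nat)%:Z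
   = (beta kk)%:Z - (c kk : nat)%:Z.
Proof.
move=> Hr Hc Hb; rewrite inc_pt // /subunit ffunE.
case: (eqVneq kk j) => [->|H]; last by rewrite andbT.
by rewrite Hc intP // subr0.
Qed.

Lemma degN_inc (beta : 'I_n -> nat) (l : 'I_n) : degN (incv beta l) = (degN beta).+1.
Proof.
rewrite /degN (bigD1 l) //= [in RHS](bigD1 l) //= /incv eqxx addSn; congr (_ + _)%N.+1.
by apply: eq_bigr => kk /negbTE ->.
Qed.

Lemma degN_sub (beta : 'I_n -> nat) (j : 'I_n) : (0 < beta j)%N ->
  degN beta = (degN (subunit beta j)).+1.
Proof.
move=> Hb; rewrite /degN (bigD1 j) //= [in RHS](bigD1 j) //= subunit_eq -addSn prednK //.
congr (_ + _)%N; by apply: eq_bigr => kk H; rewrite subunit_ne.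
Qed.

Lemma inc_sub (beta : 'I_n -> nat) (l : 'I_n) : (0 < beta l)%N -> incv (subunit beta l) l = beta.
Proof.
move=> Hb; apply: functional_extensionality => kk; rewrite /incv /subunit.
by case: (eqVneq kk l) => [->|//]; rewrite prednK.
Qed.

Lemma sub_inc (beta : 'I_n -> nat) (l : 'I_n) : subunit (incv beta l) l = beta.
Proof.
apply: functional_extensionality => kk; rewrite /incv /subunit.
by case: (eqVneq kk l) => [->|].
Qed.

Lemma sub_inc_ne (beta : 'I_n -> nat) (j l : 'I_n) : j != l ->
  subunit (incv beta l) j = incv (subunit beta j) l.
Proof.
move=> Hjl; apply: functional_extensionality => kk; rewrite /incv /subunit.
case: (eqVneq kk l) => [->|//]; by rewrite eq_sym (negbTE Hjl).
Qed.

Lemma incv_ne (beta : 'I_n -> nat) (j l : 'I_n) : j != l -> incv beta l j = beta j.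
Proof. by rewrite /incv => /negbTE ->. Qed.

Lemma remv_addv (c : expo) (l : 'I_n) : c l = false -> remv (addv c l) l = c.
Proof.
move=> Hc; apply/ffunP => kk; rewrite !ffunE.
by case: (eqVneq kk l) => [->|_]; rewrite ?Hc ?orbF ?andbT ?andbF.
Qed.

Lemma addv_remv (c : expo) (l : 'I_n) : c l -> addv (remv c l) l = c.
Proof.
move=> Hc; apply/ffunP => kk; rewrite !ffunE.
by case: (eqVneq kk l) => [->|_]; rewrite ?Hc ?orbF ?andbT ?orbT.
Qed.

Lemma remv_addv_ne (c : expo) (j l : 'I_n) : j != l ->
  remv (addv c l) j = addv (remv c j) l.
Proof.
move=> Hjl; apply/ffunP => kk; rewrite !ffunE.
case: (eqVneq kk l) => [->|_]; rewrite ?orbT ?orbF ?andbT //; by rewrite andTb eq_sym.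
Qed.

Lemma addv_ne (c : expo) (j l : 'I_n) : j != l -> addv c l j = c j.
Proof. by rewrite ffunE => /negbTE ->; rewrite orbF. Qed.
Lemma addv_eq (c : expo) (l : 'I_n) : addv c l l.
Proof. by rewrite ffunE eqxx orbT. Qed.

Lemma incv_eq (beta : 'I_n -> nat) (l : 'I_n) : incv beta l l = (beta l).+1.
Proof. by rewrite /incv eqxx. Qed.

Lemma sgn_neq0 (l j : 'I_n) : sgn l j != 0.
Proof. by rewrite /sgn; case: ifP; rewrite ?oppr_eq0 oner_eq0. Qed.

Variables (gamma : 'I_n -> int) (l : 'I_n).
Hypothesis Hl1 : gamma l != -1.
Hypothesis Hl2 :
  (-1) ^ (gamma l) * \prod_(kk : 'I_n | kk != l) (- q kk l) ^ (gamma kk) != chi g l.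

Definition hf (f : cochain k n) : cochain k n := fun beta =>
  [ffun a : expo => if a l then 0
             else f (incv beta l) (addv a l) / Kc (incv beta l) (addv a l) l].

Lemma hf_inK m (f : cochain k n) : inK gamma m.+1 f -> inK gamma m (hf f).
Proof.
move=> Hf beta Hd a; rewrite ffunE; case: ifP => Hal; first by rewrite eqxx.
move=> Hne.
have Hf0 : f (incv beta l) (addv a l) != 0.
  by apply: contraNneq Hne => ->; rewrite mul0r.
move=> kk; rewrite -(inc_pt beta kk Hal).
by apply: (Hf (incv beta l) _ _ Hf0 kk); rewrite degN_inc Hd.
Qed.

Lemma homotopy m (f : cochain k n) : inK gamma m f ->
  (forall beta, degN beta = m.+1 -> dcoch q chi g f beta = 0) ->
  forall beta, degN beta = m -> f beta = dcoch q chi g (hf f) beta.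
Proof.
move=> Hf Hcoc beta Hd; apply/ffunP => c; rewrite dcoch_E.
case Hcons: [forall kk, (beta kk)%:Z - (c kk : nat)%:Z == gamma kk]; last first.
  have -> : f beta c = 0.
    apply/eqP; apply: (contraFT _ Hcons) => H; apply/forallP => kk; apply/eqP.
    exact: Hf Hd _ H kk.
  symmetry; apply: big1 => j _; case: ifP => // /andP [Hbj Hcj].
  rewrite ffunE; case: ifP => Hr; first by rewrite mulr0.
  have -> : f (incv (subunit beta j) l) (addv (remv c j) l) = 0.
    apply/eqP; apply: (contraFT _ Hcons) => H; apply/forallP => kk; apply/eqP.
    rewrite -(cons_pt kk Hr Hcj Hbj); apply: Hf _ _ H kk.
    by rewrite degN_inc -degN_sub.
  by rewrite mul0r mulr0.
have Hc : forall kk, (beta kk)%:Z - (c kk : nat)%:Z = gamma kk.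
  by move=> kk; apply/eqP; move/forallP: Hcons; apply.
case Hcl: (c l).
  have Hbl : (0 < beta l)%N.
    case: (posnP (beta l)) => // H0; have := Hc l; rewrite H0 Hcl /= sub0r => E.
    by move: Hl1; rewrite -E eqxx.
  rewrite (bigD1 l) //= Hbl Hcl /= big1 ?addr0.
    rewrite ffunE remv_eq /= inc_sub // addv_remv //.
    have Kn := K_nonzero Hc Hcl Hl2.
    by rewrite mulrC divfK.
  move=> j Hjl; case: ifP => // /andP [_ Hcj]; rewrite ffunE remv_ne; last by rewrite eq_sym.
  by rewrite Hcl mulr0.
have Hc' : forall kk, (incv beta l kk)%:Z - (addv c l kk : nat)%:Z = gamma kk.
  by move=> kk; rewrite inc_pt.
have Kn : Kc (incv beta l) (addv c l) l != 0 := K_nonzero Hc' (addv_eq c l) Hl2.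
have E1 := congr1 (fun u : Lam => u (addv c l)) (Hcoc (incv beta l) (etrans (degN_inc beta l) (congr1 S Hd))).
move: E1; rewrite /= dcoch_E (bigD1 l) //= incv_eq addv_eq /= sub_inc remv_addv // ffunE.
move=> E1.
rewrite (bigD1 l) //= Hcl andbF add0r.
have Eterm : forall j, j != l ->
  (if (0 < beta j)%N && c j then Kc beta c j * hf f (subunit beta j) (remv c j) else 0)
  = - (Kc (incv beta l) (addv c l) l)^-1 *
    (if (0 < incv beta l j)%N && addv c l j
     then Kc (incv beta l) (addv c l) j * f (subunit (incv beta l) j) (remv (addv c l) j)
     else 0).
  move=> j Hjl; rewrite incv_ne // addv_ne //.
  case: ifP => [/andP [Hbj Hcj]|]; last by rewrite mulr0.
  rewrite ffunE remv_ne; last by rewrite eq_sym.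
  rewrite Hcl sub_inc_ne // remv_addv_ne //.
  have Hlj : l != j by rewrite eq_sym.
  have Hb1 : (0 < incv beta l l)%N by rewrite incv_eq.
  have Hb2 : (0 < incv beta l j)%N by rewrite incv_ne.
  have Hc2 : addv c l j by rewrite addv_ne.
  have KA := K_shift Hlj Hb1 (addv_eq c l).
  rewrite sub_inc remv_addv // in KA.
  have KB := K_shift Hjl Hb2 Hc2.
  rewrite sub_inc_ne // remv_addv_ne // in KB.
  rewrite KA KB (sgn_anti Hlj).
  have Hs := sgn_neq0 j l.
  by field; rewrite Hs Kn.
rewrite (eq_bigr _ Eterm) -mulr_sumr.
move/eqP: E1; rewrite addrC addr_eq0 => /eqP ->.
by field.
Qed.

Lemma main_sec (m : nat) : cohom_vanishes q chi g gamma m.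
Proof.
case: m => [|m] f Hf Hcoc.
  move=> beta Hd; rewrite (homotopy Hf Hcoc Hd); apply/ffunP => c.
  rewrite dcoch_E ffunE; apply: big1 => j _.
  move: Hd; rewrite /degN (bigD1 j) //= => /eqP; rewrite addn_eq0 => /andP [/eqP -> _].
  by rewrite ltnn.
exists (hf f); split; first exact: hf_inK.
move=> beta Hd; symmetry; exact: (homotopy Hf Hcoc Hd).
Qed.

End S.

Theorem lemma3p1 (k : fieldType) (n : nat) (q : 'I_n -> 'I_n -> k)
    (gT : finGroupType) (chi : gT -> 'I_n -> k) (g : gT) (gamma : 'I_n -> int) :
  [pchar k] =i pred0 ->
  (0 < n)%N ->
  (forall i j, q i j != 0) ->
  (forall i j, q j i = (q i j)^-1) ->
  (forall i, q i i = -1) ->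
  (forall h i, chi h i != 0) ->
  (forall i, chi 1%g i = 1) ->
  (forall h1 h2 i, chi (h1 * h2)%g i = chi h1 i * chi h2 i) ->
  (forall l, -1 <= gamma l) ->
  ~ in_Cg q chi g gamma ->
  forall m : nat, cohom_vanishes q chi g gamma m.
Proof.
move=> _ _ Hq0 Hqinv _ _ _ _ _ HnC.
have [l /andP [Hl1 Hl2]] : exists l, (gamma l != -1) &&
   ((-1) ^ (gamma l) * \prod_(kk : 'I_n | kk != l) (- q kk l) ^ (gamma kk) != chi g l).
  apply/existsP; rewrite -[X in is_true X]negbK negb_exists; apply/negP => /forallP H.
  apply: HnC => l'; move: (H l'); rewrite negb_and !negbK => /orP [/eqP ?|/eqP ?].
  - by left.
  - by right.
move=> m; exact: (main_sec Hq0 Hqinv Hl1 Hl2).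
Qed.
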